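(* Let $G$ be a finite group having at most $5$ irrational conjugacy classes. Then $|\mathrm{cl}_{\mathbb{Q}}(G)| = |\mathrm{Irr}_{\mathbb{Q}}(G)|$.
   Context: For a finite group $G$, a conjugacy class $K$ of $G$ is called rational if $\chi(K) \in \mathbb{Q}$ for every $\chi \in \mathrm{Irr}(G)$ (the set of complex irreducible characters of $G$), and irrational otherwise. $\mathrm{cl}_{\mathbb{Q}}(G)$ denotes the set of rational conjugacy classes of $G$. An irreducible character $\chi$ is rational if $\mathbb{Q}(\chi) = \mathbb{Q}$, where $\mathbb{Q}(\chi)$ is the field generated over $\mathbb{Q}$ by the values $\chi(g)$, $g \in G$; $\mathrm{Irr}_{\mathbb{Q}}(G)$ denotes the set of rational irreducible characters of $G$. *)

(* Defs.v *)
From mathcomp Require Import all_boot all_order all_algebra all_fingroup all_solvable all_field all_character.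
Set Implicit Arguments. Unset Strict Implicit. Unset Printing Implicit Defensive.
Import GRing.Theory Num.Theory.
Local Open Scope ring_scope.

(* A conjugacy class K of G is rational if every irreducible character of G
   takes a rational value on K (class functions are constant on K, so we
   evaluate at the representative repr K). *)
Definition rational_class (gT : finGroupType) (G : {group gT}) (K : {set gT}) : bool :=
  [forall i : Iirr G, 'chi[G]_i (repr K) \in Crat].

Definition rational_irr (gT : finGroupType) (G : {group gT}) (i : Iirr G) : bool :=
  [forall g in G, 'chi[G]_i g \in Crat].

Definition rat_classes (gT : finGroupType) (G : {group gT}) : {set {set gT}} :=
  [set K in classes G | rational_class G K].

Definition irrat_classes (gT : finGroupType) (G : {group gT}) : {set {set gT}} :=
  [set K in classes G | ~~ rational_class G K].

Definition rat_irr (gT : finGroupType) (G : {group gT}) : {set Iirr G} :=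
  [set i : Iirr G | rational_irr i].

(* Main.v *)
Require Import Defs.
From mathcomp Require Import all_boot all_order all_algebra all_fingroup all_solvable all_field all_character.
From Stdlib Require Import Classical.
Set Implicit Arguments. Unset Strict Implicit. Unset Printing Implicit Defensive.
Import GRing.Theory Num.Theory Num.Def.
Local Open Scope ring_scope.

Section Main.
Variables (gT : finGroupType) (G : {group gT}).
Local Notation n := #|G|.

Definition aut_pow (u : {rmorphism algC -> algC}) (k : nat) :=
  forall z : algC, z ^+ n = 1 -> u z = z ^+ k.

Lemma aut_powE u k i g : aut_pow u k -> g \in G ->
  u ('chi[G]_i g) = 'chi_i (g ^+ k)%g.
Proof.
move=> Hu Gg.
have sHG : <[g]>%G \subset G by rewrite cycle_subG.
have Hg : g \in <[g]>%G := cycle_id g.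
have Hgk : (g ^+ k)%g \in <[g]>%G by rewrite groupX.
rewrite -(cfResE _ sHG Hg) -(cfResE _ sHG Hgk).
have [r ->] := char_sum_irr (cfRes_char <[g]>%G (irr_char i)).
rewrite !sum_cfunE rmorph_sum; apply: eq_bigr => j _.
have Lj : 'chi[<[g]>%G]_j \is a linear_char by rewrite irr_cyclic_lin ?cycle_cyclic.
rewrite lin_charX // Hu // -lin_charX // expg_cardG ?lin_char1 //.
Qed.

Lemma aut_pow_exists (u : {rmorphism algC -> algC}) :
  exists k, coprime k n /\ aut_pow u k.
Proof.
have [z prim_z] := C_prim_root_exists (cardG_gt0 G).
have prim_uz : n.-primitive_root (u z) by rewrite fmorph_primitive_root.
have [k Dk] := prim_rootP prim_z (prim_expr_order prim_uz).
exists k; split.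
  by rewrite -(prim_root_exp_coprime k prim_z) -Dk.
move=> w /(prim_rootP prim_z)[j ->].
by rewrite rmorphXn /= Dk -!exprM mulnC.
Qed.

Lemma fixed_Crat i g : g \in G ->
  (forall nu : {rmorphism algC -> algC}, nu ('chi[G]_i g) = 'chi_i g) ->
  'chi_i g \in Crat.
Proof.
move=> Gg Hfix.
have [Qn galQn [QnC gQnC [w _ QnG]]] := group_num_field_exists G.
have [a Da] := QnG _ G _ (irr_char i) g (order_dvdG Gg).
have : a \in fixedField ('Gal({:Qn} / 1))%g.
  apply/fixedFieldP; first exact: memvf.
  move=> nuQ _; have [nu Dnu] := gQnC nuQ.
  by apply: (fmorph_inj QnC); rewrite Dnu Da Hfix.
rewrite (galois_fixedField galQn) => /vlineP[q Dq].
by rewrite -Da Dq rmorphZ_num rmorph1 mulr1 Crat_rat.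
Qed.


Lemma pow_aut_exists k : coprime k n -> {u | aut_pow u k}.
Proof. by move=> ck; apply: Qn_aut_exists. Qed.

Definition fixedc (i : Iirr G) k := [forall g in G, 'chi[G]_i (g ^+ k)%g == 'chi_i g].
Definition relc (i : Iirr G) k (j : Iirr G) :=
  forall g, g \in G -> 'chi[G]_j g = 'chi_i (g ^+ k)%g.
Definition irr_el g := (g \in G) && ~~ [forall i : Iirr G, 'chi[G]_i g \in Crat].
Definition el_fixed g k := (g ^+ k)%g \in (g ^: G)%g.

Lemma fixedcP i k : reflect (forall g, g \in G -> 'chi[G]_i (g ^+ k)%g = 'chi_i g) (fixedc i k).
Proof.
apply: (iffP forall_inP) => H g Gg; first exact/eqP/H.
by apply/eqP/H.
Qed.

Lemma cf_class (f : 'CF(G)) x y : y \in (x ^: G)%g -> f y = f x.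
Proof. by case/imsetP => z Gz ->; rewrite cfunJ. Qed.

Lemma chi_eq_on i j : (forall g, g \in G -> 'chi[G]_i g = 'chi_j g) -> i = j.
Proof. by move=> H; apply: irr_inj; apply: cfun_inP. Qed.

Lemma act_ex k i : coprime k n -> exists j, relc i k j.
Proof.
move=> ck; have [u Hu] := pow_aut_exists ck.
exists (aut_Iirr u i) => g Gg.
by rewrite aut_IirrE cfunE (aut_powE i Hu Gg).
Qed.

Lemma relc_uniq i k j j' : relc i k j -> relc i k j' -> j = j'.
Proof. by move=> H1 H2; apply: chi_eq_on => g Gg; rewrite H1 // H2. Qed.

Lemma relc_inj i i' k j : coprime k n -> relc i k j -> relc i' k j -> i = i'.
Proof.
move=> ck H1 H2; have [u Hu] := pow_aut_exists ck.
apply: chi_eq_on => g Gg; apply: (fmorph_inj u).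
by rewrite (aut_powE i Hu Gg) (aut_powE i' Hu Gg) -H1 // H2.
Qed.

Lemma relc_fixed i k : relc i k i -> fixedc i k.
Proof. by move=> H; apply/fixedcP => g Gg; rewrite -H. Qed.

Lemma fixed_relc i k : fixedc i k -> relc i k i.
Proof. by move/fixedcP => H g Gg; rewrite H. Qed.

Lemma relc_neq i k j : relc i k j -> ~~ fixedc i k -> j != i.
Proof.
move=> H nf; apply/eqP => Dj; subst j; by rewrite relc_fixed in nf.
Qed.

Lemma rat_fixed i k : rational_irr i -> coprime k n -> fixedc i k.
Proof.
move=> Hr0 ck; have Hr := forall_inP Hr0; have [u Hu] := pow_aut_exists ck.
by apply/fixedcP => g Gg; rewrite -(aut_powE i Hu Gg) aut_Crat // Hr.
Qed.

Lemma irrat_moved i : ~~ rational_irr i -> exists k, coprime k n /\ ~~ fixedc i k.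
Proof.
move=> /forall_inPn[g Gg nQ].
have : ~ (forall nu : {rmorphism algC -> algC}, nu ('chi[G]_i g) = 'chi_i g).
  by move=> H; rewrite (fixed_Crat Gg H) in nQ.
move=> /not_all_ex_not[nu Hnu].
have [k [ck Hk]] := aut_pow_exists nu.
exists k; split => //; apply/fixedcP => H.
by apply: Hnu; rewrite (aut_powE i Hk Gg) H.
Qed.

Lemma rel_rat i k j : coprime k n -> relc i k j -> rational_irr j = rational_irr i.
Proof.
move=> ck H; have [u Hu] := pow_aut_exists ck.
apply/forall_inP/forall_inP => R g Gg.
  by rewrite -(Crat_aut u) (aut_powE i Hu Gg) -H // R.
by rewrite H // -(aut_powE i Hu Gg) Crat_aut R.
Qed.

Lemma sep x y : x \in G -> (forall i, 'chi[G]_i y = 'chi_i x) -> y \in (x ^: G)%g.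
Proof.
move=> Gx H.
have := second_orthogonality_relation y Gx.
have := second_orthogonality_relation x Gx.
rewrite class_refl /= => E1.
rewrite (eq_bigr (fun i => 'chi[G]_i x * ('chi_i x)^*)) => [|i _]; last by rewrite H.
rewrite E1; case: (y \in _) => //=; rewrite mulr0n mulr1n => /eqP.
by rewrite pnatr_eq0 eqn0Ngt cardG_gt0.
Qed.

Lemma rat_el_fixed g k : g \in G -> ~~ irr_el g -> coprime k n -> el_fixed g k.
Proof.
move=> Gg; rewrite /irr_el Gg negbK => /forallP Hr ck.
have [u Hu] := pow_aut_exists ck.
apply: sep => // i; by rewrite -(aut_powE i Hu Gg) aut_Crat.
Qed.

Lemma irr_el_moved g : irr_el g -> exists k, coprime k n /\ ~ el_fixed g k.
Proof.
case/andP => Gg /forallPn[i nQ].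
have : ~ (forall nu : {rmorphism algC -> algC}, nu ('chi[G]_i g) = 'chi_i g).
  by move=> H; rewrite (fixed_Crat Gg H) in nQ.
move=> /not_all_ex_not[nu Hnu].
have [k [ck Hk]] := aut_pow_exists nu.
exists k; split => // Hf; apply: Hnu.
by rewrite (aut_powE i Hk Gg) (cf_class _ Hf).
Qed.

Lemma irr_elX g k : irr_el g -> coprime k n -> irr_el (g ^+ k)%g.
Proof.
case/andP => Gg /forallPn[i nQ] ck; have [u Hu] := pow_aut_exists ck.
rewrite /irr_el groupX //=; apply/forallPn; exists i.
by rewrite -(aut_powE i Hu Gg) Crat_aut.
Qed.

Lemma irr_el_G g : irr_el g -> g \in G.
Proof. by case/andP. Qed.

Lemma irr_el_class x : irr_el x -> (x ^: G)%g \in irrat_classes G.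
Proof.
case/andP=> Gx nr; rewrite inE mem_classes //=.
rewrite /rational_class; have [y Gy ->] := repr_class G x.
apply: contra nr => /forallP H; apply/forallP => i; by rewrite -(cfunJ _ x Gy) H.
Qed.

Hypothesis small : (#|irrat_classes G| <= 5)%N.

Lemma six (R : gT -> gT -> Prop) p1 q1 p2 q2 p3 q3 :
  (forall x y, x \in G -> y \in (x ^: G)%g -> R x y) ->
  (forall x y, R x y -> R y x) -> (forall x y z, R x y -> R y z -> R x z) ->
  irr_el p1 -> irr_el q1 -> irr_el p2 -> irr_el q2 -> irr_el p3 -> irr_el q3 ->
  q1 \notin (p1 ^: G)%g -> q2 \notin (p2 ^: G)%g -> q3 \notin (p3 ^: G)%g ->
  R p1 q1 -> R p2 q2 -> R p3 q3 ->
  ~ R p1 p2 -> ~ R p1 p3 -> ~ R p2 p3 -> False.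
Proof.
move=> Rc Rs Rt I1 I1' I2 I2' I3 I3' N1 N2 N3 R1 R2 R3 N12 N13 N23.
have neq_of a b pa pb : R pa a -> R pb b -> ~ R pa pb -> irr_el a ->
    (a ^: G)%g != (b ^: G)%g.
  move=> Ha Hb Hab Ia; apply/eqP => E; apply: Hab.
  have Rab : R a b by apply: Rc (irr_el_G Ia) _; rewrite E class_refl.
  exact: Rt Ha (Rt _ _ _ Rab (Rs _ _ Hb)).
have neq_p a b : b \notin (a ^: G)%g -> (a ^: G)%g != (b ^: G)%g.
  by move=> Nb; apply: contra Nb => /eqP ->; rewrite class_refl.
have Rr a : irr_el a -> R a a by move=> Ia; apply: Rc (irr_el_G Ia) (class_refl _ _).
have R1' := Rr _ I1; have R2' := Rr _ I2; have R3' := Rr _ I3.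
have N21 : ~ R p2 p1 by move/Rs.
have N31 : ~ R p3 p1 by move/Rs.
have N32 : ~ R p3 p2 by move/Rs.
pose s := [:: (p1 ^: G)%g; (q1 ^: G)%g; (p2 ^: G)%g; (q2 ^: G)%g; (p3 ^: G)%g; (q3 ^: G)%g].
have us : uniq s.
{ rewrite /s /= !inE !negb_or /= !andbT.
  repeat (apply/andP; split).
  - exact: neq_p N1.
  - exact: (neq_of _ _ _ _ R1' R2' N12 I1).
  - exact: (neq_of _ _ _ _ R1' R2 N12 I1).
  - exact: (neq_of _ _ _ _ R1' R3' N13 I1).
  - exact: (neq_of _ _ _ _ R1' R3 N13 I1).
  - exact: (neq_of _ _ _ _ R1 R2' N12 I1').
  - exact: (neq_of _ _ _ _ R1 R2 N12 I1').
  - exact: (neq_of _ _ _ _ R1 R3' N13 I1').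
  - exact: (neq_of _ _ _ _ R1 R3 N13 I1').
  - exact: neq_p N2.
  - exact: (neq_of _ _ _ _ R2' R3' N23 I2).
  - exact: (neq_of _ _ _ _ R2' R3 N23 I2).
  - exact: (neq_of _ _ _ _ R2 R3' N23 I2').
  - exact: (neq_of _ _ _ _ R2 R3 N23 I2').
  - exact: neq_p N3. }
have As : all (fun K => K \in irrat_classes G) s by rewrite /= !irr_el_class.
have : (size s <= size (enum (irrat_classes G)))%N.
  by apply: uniq_leq_size us _ => K Ks; rewrite mem_enum; exact: (allP As).
by rewrite -cardE => /leq_trans /(_ small).
Qed.


Definition good k := coprime k n /\ forall g, irr_el g -> ~ el_fixed g k.

Definition props k (f : 'CF(G)) :=
  [/\ forall g, g \in G -> ~~ irr_el g -> f g = 0,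
      forall g, g \in G -> f (g ^+ k)%g = f g
    & '[f, 1] = 0].

Lemma sum0 (f : 'CF(G)) : '[f, 1] = 0 -> \sum_(g in G) f g = 0.
Proof.
rewrite cfdotE => /eqP; rewrite mulf_eq0 invr_eq0 pnatr_eq0 eqn0Ngt cardG_gt0 /= => /eqP E.
rewrite -[RHS]E; apply: eq_bigr => g Gg; by rewrite cfun1E Gg conjC1 mulr1.
Qed.

Lemma nz_irr_el k f y : props k f -> f y != 0 -> irr_el y.
Proof.
case=> f0 _ _ nz; have Gy : y \in G.
  by apply: contraR nz => /(cfun0 f) ->.
by apply: contraR nz => /(f0 _ Gy) ->.
Qed.

Lemma Zlem k f x1 : good k -> props k f -> irr_el x1 -> f x1 = 0 -> f = 0.
Proof.
move=> [ck gk] pf I1 fx1; have [f0 fk f1] := pf.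
apply/cfunP => y; rewrite cfunE; apply/eqP; apply: contraT => nzy.
have I2 := nz_irr_el pf nzy.
have Hval : forall z, z \in G -> f z = 0 \/ f z = f y.
  move=> z Gz; case: (eqVneq (f z) 0) => [->|nz]; first by left.
  case: (eqVneq (f z) (f y)) => [->|nzc]; first by right.
  exfalso; have I3 := nz_irr_el pf nz.
  apply: (@six (fun a b => f a = f b) x1 (x1 ^+ k)%g y (y ^+ k)%g z (z ^+ k)%g).
  - by move=> a b _ /(cf_class f) ->.
  - by move=> a b ->.
  - by move=> a b c -> ->.
  - exact: I1.
  - exact: irr_elX.
  - exact: I2.
  - exact: irr_elX.
  - exact: I3.
  - exact: irr_elX.
  - by apply/negP; apply: gk.
  - by apply/negP; apply: gk.
  - by apply/negP; apply: gk.
  - by rewrite fk // irr_el_G.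
  - by rewrite fk // irr_el_G.
  - by rewrite fk // irr_el_G.
  - by move=> E; move: nzy; rewrite -E fx1 eqxx.
  - by move=> E; move: nz; rewrite -E fx1 eqxx.
  - by move=> E; move: nzc; rewrite E eqxx.
have := sum0 f1.
rewrite (eq_bigr (fun g => f y *+ (f g == f y))) => [|g Gg]; last first.
  by case: (Hval g Gg) => ->; rewrite ?eqxx ?mulr1n // eq_sym (negbTE nzy) mulr0n.
rewrite sumrMnr => /eqP; rewrite mulrn_eq0 (negbTE nzy) orbF.
by rewrite (bigD1 y) ?irr_el_G //= eqxx.
Qed.


Lemma Plem k f f' x1 : good k -> props k f -> props k f' -> irr_el x1 -> f x1 != 0 ->
  f' = (f' x1 / f x1) *: f.
Proof.
move=> gdk [f0 fk f1] [g0 gk' g1] I1 nz.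
apply/eqP; rewrite -subr_eq0; apply/eqP.
apply: (Zlem gdk _ I1).
  split.
  - by move=> g Gg ng; rewrite !cfunE (f0 g Gg ng) (g0 g Gg ng) mulr0 subr0.
  - by move=> g Gg; rewrite !cfunE (fk g Gg) (gk' g Gg).
  - by rewrite cfdotBl cfdotZl f1 g1 mulr0 subr0.
by rewrite !cfunE divfK // subrr.
Qed.

Lemma ratI0 : rational_irr (0 : Iirr G).
Proof. by apply/forall_inP => g Gg; rewrite irr0 cfun1E Gg rpred_nat. Qed.

Lemma props_diff k i s j : good k -> ~~ rational_irr i -> fixedc i k ->
  coprime s n -> relc i s j -> props k ('chi_i - 'chi_j).
Proof.
move=> [ck gk] nri /fixedcP fik cs rij; split.
- by move=> g Gg ng; rewrite !cfunE rij // (cf_class _ (rat_el_fixed Gg ng cs)) subrr.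
- by move=> g Gg; rewrite !cfunE (fik g Gg) (rij _ (groupX k Gg)) (rij _ Gg) expgAC (fik _ (groupX s Gg)).
- rewrite cfdotBl -irr0 !cfdot_irr.
  have i0 : i != 0 by apply: contraNneq nri => ->; exact: ratI0.
  have j0 : j != 0 by apply: contraNneq nri => Dj; rewrite -(rel_rat cs rij) Dj ratI0.
  by rewrite (negbTE i0) (negbTE j0) subrr.
Qed.

Lemma selfopp (x : algC) : x = - x -> x = 0.
Proof. move=> E; apply/eqP; have : x *+ 2 == 0 by rewrite mulr2n {2}E subrr. by rewrite mulrn_eq0. Qed.

Section Triple.
Variables (k : nat) (i : Iirr G) (h : nat) (j : Iirr G).
Hypotheses (gk : good k) (nri : ~~ rational_irr i) (fik : fixedc i k)
  (ch : coprime h n) (rij : relc i h j) (nij : j != i).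
Let d := 'chi[G]_i - 'chi_j.

Lemma T_props : props k d.
Proof. exact: props_diff gk nri fik ch rij. Qed.

Lemma T_nz y : irr_el y -> d y != 0.
Proof.
move=> Iy; apply/eqP => dy0; have := Zlem gk T_props Iy dy0.
move/eqP; rewrite subr_eq0 => /eqP /irr_inj Eij.
by move: nij; rewrite Eij eqxx.
Qed.

Lemma T_ex : exists x, irr_el x.
Proof.
have : d != 0.
  by apply/eqP; move/eqP; rewrite subr_eq0 => /eqP /irr_inj Eij; move: nij; rewrite Eij eqxx.
move=> nd; case: (boolP [exists g, d g != 0]) => [/existsP[g nz]|].
  by exists g; exact: nz_irr_el T_props nz.
move/existsPn => H; case/eqP: nd; apply/cfunP => g; move: (H g); rewrite negbK => /eqP ->.
by rewrite cfunE.
Qed.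

Lemma T_M2 s j' : coprime s n -> relc i s j' -> j' != i -> j' = j.
Proof.
move=> cs r nj; have pd' := props_diff gk nri fik cs r.
have [x Ix] := T_ex; have nz := T_nz Ix.
have E := Plem gk T_props pd' Ix nz.
case: (eqVneq j' j) => // nj'; exfalso.
have := congr1 (fun f => '[f, 'chi_j]) E; rewrite /= cfdotZl.
rewrite /d !cfdotBl !cfdot_irr eq_sym (negbTE nij) (negbTE nj') eqxx subrr sub0r mulrN1.
move/eqP; rewrite eq_sym oppr_eq0 mulf_eq0 invr_eq0 (negbTE nz) orbF => /eqP E0.
move: E; rewrite E0 mul0r scale0r => /eqP; rewrite subr_eq0 => /eqP /irr_inj Eij.
by move: nj; rewrite Eij eqxx.
Qed.

Lemma T_M3 s j' : coprime s n -> relc i s j' -> j' != i -> fixedc i (s * s).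
Proof.
move=> cs r nj; have Ej := T_M2 cs r nj; subst j'.
have css : coprime (s * s) n by rewrite coprimeMl cs.
have [j2 r2] := act_ex i css.
case: (eqVneq j2 i) => [E|nj2]; first by subst j2; apply: relc_fixed.
have E2 := T_M2 css r2 nj2; subst j2.
have rjj : relc j s j by move=> g Gg; rewrite r2 // r ?groupX // expgM.
by have := relc_inj cs r rjj => Eij; move: nij; rewrite Eij eqxx.
Qed.

Lemma T_nfh : ~~ fixedc i h.
Proof.
apply/negP => /fixed_relc r; have := relc_uniq r rij => E.
by move: nij; rewrite E eqxx.
Qed.

Lemma T_M4 s g : coprime s n -> g \in G ->
  d (g ^+ s)%g = if fixedc i s then d g else - d g.
Proof.
move=> cs Gg; rewrite /d !cfunE.
case: ifP => fs.
  move/fixedcP: fs => fs.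
  by rewrite (fs g Gg) (rij (groupX s Gg)) expgAC (fs _ (groupX h Gg)) -(rij Gg).
have [j' r] := act_ex i cs.
have nj : j' != i by apply: relc_neq r _; rewrite fs.
have Ej := T_M2 cs r nj; subst j'.
have /fixedcP fss := T_M3 cs r nj.
by rewrite -(r _ Gg) (r _ (groupX s Gg)) -expgM (fss _ Gg) opprB.
Qed.

Lemma T_M4' s g : coprime s n -> g \in G -> ~~ fixedc i s -> d (g ^+ s)%g = - d g.
Proof. by move=> cs Gg nf; rewrite T_M4 // (negbTE nf). Qed.

Lemma T_M4f s g : coprime s n -> g \in G -> fixedc i s -> d (g ^+ s)%g = d g.
Proof. by move=> cs Gg f; rewrite T_M4 // f. Qed.

Lemma T_goodh : good h.
Proof.
split => // y Iy Hf.
have E1 : d (y ^+ h)%g = d y by apply: cf_class.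
rewrite T_M4' ?irr_el_G ?T_nfh // in E1.
by move/eqP: (selfopp (esym E1)); apply/negP; exact: T_nz Iy.
Qed.

Lemma T_M6 x0 y : irr_el x0 -> irr_el y -> d y = d x0 \/ d y = - d x0.
Proof.
move=> I0 Iy; case: (eqVneq (d y) (d x0)) => [|n1]; first by left.
case: (eqVneq (d y) (- d x0)) => [|n2]; first by right.
exfalso; have [ck gk'] := gk; have [_ fk _] := T_props.
have Ih : irr_el (x0 ^+ h)%g by apply: irr_elX.
apply: (@six (fun a b => d a = d b) x0 (x0 ^+ k)%g (x0 ^+ h)%g ((x0 ^+ h) ^+ k)%g y (y ^+ k)%g).
- by move=> a b _ /(cf_class d) ->.
- by move=> a b ->.
- by move=> a b c -> ->.
- exact: I0.
- exact: irr_elX.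
- exact: Ih.
- exact: irr_elX.
- exact: Iy.
- exact: irr_elX.
- by apply/negP; apply: gk'.
- by apply/negP; apply: gk'.
- by apply/negP; apply: gk'.
- by rewrite fk // irr_el_G.
- by rewrite fk // irr_el_G.
- by rewrite fk // irr_el_G.
- rewrite T_M4' ?irr_el_G ?T_nfh // => E.
  by move/eqP: (selfopp E); apply/negP; exact: T_nz I0.
- by move=> E; move: n1; rewrite E eqxx.
- by rewrite T_M4' ?irr_el_G ?T_nfh // => E; move: n2; rewrite -E eqxx.
Qed.

Lemma T_norm : '[d] = 2.
Proof.
by rewrite cfnormB !cfnorm_irr cfdot_irr eq_sym (negbTE nij) conjC0 addr0 subr0.
Qed.

Lemma T_M7 x0 : irr_el x0 ->
  (\sum_(g in G) (irr_el g : nat))%:R * (d x0 * (d x0)^*) = 2 * n%:R.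
Proof.
move=> I0.
have := T_norm; rewrite cfdotE.
rewrite (eq_bigr (fun g => (d x0 * (d x0)^*) *+ irr_el g)) => [|g Gg]; last first.
  case: (boolP (irr_el g)) => Ig.
    by case: (T_M6 I0 Ig) => ->; rewrite ?rmorphN ?mulrNN mulr1n.
  have [f0 _ _] := T_props; by rewrite f0 // mul0r mulr0n.
rewrite sumrMnr => E.
have nz : n%:R != 0 :> algC by rewrite pnatr_eq0 eqn0Ngt cardG_gt0.
by rewrite -E [RHS]mulrC [RHS]mulrA mulfV // mul1r mulr_natl.
Qed.

Lemma T_M8 x0 : irr_el x0 -> (d x0)^* = d x0 \/ (d x0)^* = - d x0.
Proof.
move=> I0; have [s [cs Hs]] := aut_pow_exists conjC.
have -> : (d x0)^* = d (x0 ^+ s)%g.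
  by rewrite /d !cfunE rmorphB /= !(aut_powE _ Hs (irr_el_G I0)).
rewrite T_M4 ?irr_el_G //; case: ifP => _; by [left | right].
Qed.

Lemma T_M9 x0 s u : irr_el x0 -> coprime s n -> aut_pow u s ->
  fixedc i s = (u (d x0) == d x0).
Proof.
move=> I0 cs Hu.
have -> : u (d x0) = d (x0 ^+ s)%g.
  by rewrite /d !cfunE rmorphB /= !(aut_powE _ Hu (irr_el_G I0)).
rewrite T_M4 ?irr_el_G //; case: ifP => _; first by rewrite eqxx.
apply/esym/negP => /eqP E.
by move/eqP: (selfopp (esym E)); apply/negP; exact: T_nz I0.
Qed.

End Triple.


Definition orb x y := [/\ x \in G, y \in G & exists s, coprime s n /\ y \in ((x ^+ s) ^: G)%g].

Lemma clX x y s : y \in (x ^: G)%g -> (y ^+ s)%g \in ((x ^+ s) ^: G)%g.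
Proof. by case/imsetP => z Gz ->; rewrite -conjXg memJ_class. Qed.

Lemma cl_G x y : x \in G -> y \in (x ^: G)%g -> y \in G.
Proof. by move=> Gx /imsetP[z Gz ->]; rewrite groupJ. Qed.

Lemma pow_tot x s : x \in G -> coprime s n -> (x ^+ (s ^ totient n))%g = x.
Proof.
move=> Gx cs.
by rewrite -(expg_mod _ (expg_cardG Gx)) Euler_exp_totient // expg_mod ?expg_cardG // expg1.
Qed.

Lemma orb_class x y : x \in G -> y \in (x ^: G)%g -> orb x y.
Proof.
move=> Gx Hy; split => //; first exact: cl_G Hy.
by exists 1%N; rewrite coprime1n expg1.
Qed.

Lemma orb_pow x s : x \in G -> coprime s n -> orb x (x ^+ s)%g.
Proof. by move=> Gx cs; split; rewrite ?groupX //; exists s; rewrite class_refl. Qed.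

Lemma orb_sym x y : orb x y -> orb y x.
Proof.
case=> Gx Gy [s [cs Hy]]; split => //.
exists (s ^ (totient n).-1)%N; split; first exact: coprimeXl.
have := clX (s ^ (totient n).-1)%N Hy.
rewrite -expgM -expnS prednK ?totient_gt0 ?cardG_gt0 // pow_tot //.
by rewrite class_sym.
Qed.

Lemma orb_trans x y z : orb x y -> orb y z -> orb x z.
Proof.
case=> Gx Gy [s [cs Hy]] [_ Gz [t [ct Hz]]]; split => //.
exists (s * t)%N; split; first by rewrite coprimeMl cs.
have := clX t Hy; rewrite -expgM => /class_eqP <-.
exact: Hz.
Qed.

Lemma el_fixed_orb x y a : orb x y -> el_fixed x a -> el_fixed y a.
Proof.
case=> Gx Gy [s [cs Hy]] fx.
rewrite /el_fixed.
have E1 : (y ^: G)%g = ((x ^+ s) ^: G)%g by apply/class_eqP.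
have := clX a Hy; rewrite -expgM mulnC expgM.
have := clX s fx; rewrite -expgM mulnC expgM => /class_eqP ->.
by rewrite E1.
Qed.

Lemma el_fixed_cancel x a b : el_fixed x b -> el_fixed x (b * a) -> el_fixed x a.
Proof.
rewrite /el_fixed => fb fba.
rewrite expgM in fba.
have E : ((x ^+ b ^+ a) ^: G)%g = ((x ^+ a) ^: G)%g by apply/class_eqP; exact: clX a fb.
have E2 : ((x ^+ b ^+ a) ^: G)%g = (x ^: G)%g by apply/class_eqP.
by rewrite -E2 E class_refl.
Qed.

Lemma good_exists : exists k, good k.
Proof.
case: (boolP [exists g, irr_el g]) => [/existsP[x1 I1]|]; last first.
  move/existsPn => H; exists 1%N; split; first exact: coprime1n.
  by move=> g Ig; move: (H g); rewrite Ig.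
have [a [ca na]] := irr_el_moved I1.
case: (classic (good a)) => [ga|nga]; first by exists a.
have [x2 [I2 fa2]] : exists x2, irr_el x2 /\ el_fixed x2 a.
  apply: NNPP => H; apply: nga; split => // g Ig fg; apply: H; by exists g.
have [b [cb nb]] := irr_el_moved I2.
case: (classic (good b)) => [gb|ngb]; first by exists b.
have [x3 [I3 fb3]] : exists x3, irr_el x3 /\ el_fixed x3 b.
  apply: NNPP => H; apply: ngb; split => // g Ig fg; apply: H; by exists g.
have N12 : ~ orb x1 x2 := fun o => na (el_fixed_orb (orb_sym o) fa2).
have cover : forall y, irr_el y -> orb x1 y \/ orb x2 y.
  move=> y Iy; apply: NNPP => H.
  have [c [cc nc]] := irr_el_moved Iy.
  apply: (@six orb x1 (x1 ^+ a)%g x2 (x2 ^+ b)%g y (y ^+ c)%g).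
  - exact: orb_class.
  - exact: orb_sym.
  - exact: orb_trans.
  - exact: I1.
  - exact: irr_elX.
  - exact: I2.
  - exact: irr_elX.
  - exact: Iy.
  - exact: irr_elX.
  - by apply/negP.
  - by apply/negP.
  - by apply/negP.
  - by apply: orb_pow => //; apply: irr_el_G.
  - by apply: orb_pow => //; apply: irr_el_G.
  - by apply: orb_pow => //; apply: irr_el_G.
  - exact: N12.
  - by move=> o; apply: H; left.
  - by move=> o; apply: H; right.
exists (a * b)%N; split; first by rewrite coprimeMl ca cb.
move=> y Iy fab.
have fb1 : el_fixed x1 b.
  case: (cover _ I3) => o; first exact: el_fixed_orb (orb_sym o) fb3.
  by exfalso; apply: nb; exact: el_fixed_orb (orb_sym o) fb3.
case: (cover _ Iy) => o.
- apply: na; apply: (el_fixed_cancel fb1).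
  by rewrite mulnC; apply: el_fixed_orb (orb_sym o) fab.
- apply: nb; apply: (el_fixed_cancel fa2).
  exact: el_fixed_orb (orb_sym o) fab.
Qed.


Lemma fixed_cancel i k h : fixedc i k -> fixedc i (k * h) -> fixedc i h.
Proof.
move=> /fixedcP fk /fixedcP fkh; apply/fixedcP => g Gg.
by rewrite -(fk _ (groupX h Gg)) -expgM mulnC fkh.
Qed.

Definition pmrel (x y : algC) := x = y \/ x = - y.

Lemma pm_same (x y : algC) : x * x^* = y * y^* ->
  ((x^* = x /\ y^* = y) \/ (x^* = - x /\ y^* = - y)) -> pmrel x y.
Proof.
move=> E H; have : (x ^+ 2 == y ^+ 2).
  case: H => [[ex ey]|[ex ey]]; rewrite !expr2.
    by rewrite -{2}ex -{2}ey E.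
  have Ex : x * x = - (x * x^*) by rewrite ex mulrN opprK.
  have Ey : y * y = - (y * y^*) by rewrite ey mulrN opprK.
  by rewrite Ex Ey E.
by rewrite eqf_sqr => /orP[/eqP E'|/eqP E']; [left | right].
Qed.

Lemma pig (a b c : algC) : a * a^* = b * b^* -> a * a^* = c * c^* ->
  (a^* = a \/ a^* = - a) -> (b^* = b \/ b^* = - b) -> (c^* = c \/ c^* = - c) ->
  [\/ pmrel a b, pmrel a c | pmrel b c].
Proof.
move=> Eab Eac ha hb hc.
have Ebc : b * b^* = c * c^* by rewrite -Eab.
case: ha => ha; case: hb => hb.
- by apply: Or31; apply: pm_same; auto.
- case: hc => hc; first by apply: Or32; apply: pm_same; auto.
  by apply: Or33; apply: pm_same; auto.
- case: hc => hc; first by apply: Or33; apply: pm_same; auto.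
  by apply: Or32; apply: pm_same; auto.
- by apply: Or31; apply: pm_same; auto.
Qed.

Lemma stab_eq x0 (ka ha kb hb : nat) (ia ja ib jb : Iirr G) :
  good ka -> ~~ rational_irr ia -> fixedc ia ka -> coprime ha n -> relc ia ha ja -> ja != ia ->
  good kb -> ~~ rational_irr ib -> fixedc ib kb -> coprime hb n -> relc ib hb jb -> jb != ib ->
  irr_el x0 -> pmrel (('chi_ia - 'chi_ja) x0) (('chi_ib - 'chi_jb) x0) ->
  forall s, coprime s n -> fixedc ia s = fixedc ib s.
Proof.
move=> gA nA fA cA rA jA gB nB fB cB rB jB I0 pm s cs.
have [u Hu] := pow_aut_exists cs.
rewrite (T_M9 gA nA fA cA rA jA I0 cs Hu) (T_M9 gB nB fB cB rB jB I0 cs Hu).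
by case: pm => ->; rewrite ?rmorphN ?eqr_opp.
Qed.

Lemma no_good_fails :
  (forall k, good k -> exists i, ~~ rational_irr i /\ fixedc i k) -> False.
Proof.
move=> NG.
have [k1 g1] := good_exists.
have [i1 [nr1 f1]] := NG _ g1.
have [h1 [c1 nf1]] := irrat_moved nr1.
have [j1 r1] := act_ex i1 c1.
have n1 : j1 != i1 := relc_neq r1 nf1.
have gh1 := T_goodh g1 nr1 f1 c1 r1 n1.
have [i2 [nr2 f2]] := NG _ gh1.
have [h2 [c2 nf2]] := irrat_moved nr2.
have [j2 r2] := act_ex i2 c2.
have n2 : j2 != i2 := relc_neq r2 nf2.
have [ck1 gk1] := g1.
have g3 : good (k1 * h1).
  split; first by rewrite coprimeMl ck1 c1.
  move=> y Iy fy; have Gy := irr_el_G Iy.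
  have E := cf_class ('chi_i1 - 'chi_j1) fy.
  rewrite expgM (T_M4' g1 nr1 f1 c1 r1 n1 c1 (groupX _ Gy) nf1) in E.
  rewrite (T_M4f g1 nr1 f1 c1 r1 n1 ck1 Gy f1) in E.
  by move/eqP: (selfopp (esym E)); apply/negP; exact: T_nz g1 nr1 f1 c1 r1 n1 y Iy.
have [i3 [nr3 f3]] := NG _ g3.
have [h3 [c3 nf3]] := irrat_moved nr3.
have [j3 r3] := act_ex i3 c3.
have n3 : j3 != i3 := relc_neq r3 nf3.
have [x0 I0] := T_ex g1 nr1 f1 c1 r1 n1.
have N1 := T_M7 g1 nr1 f1 c1 r1 n1 I0.
have N2 := T_M7 gh1 nr2 f2 c2 r2 n2 I0.
have N3 := T_M7 g3 nr3 f3 c3 r3 n3 I0.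
have Nnz : (\sum_(g in G) (irr_el g : nat))%:R != 0 :> algC.
  by rewrite pnatr_eq0 (bigD1 x0) ?irr_el_G //= I0.
have E12 := mulfI Nnz (etrans N1 (esym N2)).
have E13 := mulfI Nnz (etrans N1 (esym N3)).
case: (pig E12 E13 (T_M8 g1 nr1 f1 c1 r1 n1 I0) (T_M8 gh1 nr2 f2 c2 r2 n2 I0)
          (T_M8 g3 nr3 f3 c3 r3 n3 I0)) => pm.
- have := stab_eq g1 nr1 f1 c1 r1 n1 gh1 nr2 f2 c2 r2 n2 I0 pm c1.
  by rewrite f2 (negbTE nf1).
- have cs : coprime (k1 * h1) n by case: g3.
  have := stab_eq g1 nr1 f1 c1 r1 n1 g3 nr3 f3 c3 r3 n3 I0 pm cs.
  rewrite f3 => F; have := fixed_cancel f1 F; by rewrite (negbTE nf1).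
- have cs : coprime (k1 * h1) n by case: g3.
  have := stab_eq gh1 nr2 f2 c2 r2 n2 g3 nr3 f3 c3 r3 n3 I0 pm cs.
  rewrite f3 mulnC => F; have f2k := fixed_cancel f2 F.
  have pd2 := props_diff g1 nr2 f2k c2 r2.
  have E := Plem g1 (T_props g1 nr1 f1 c1 r1) pd2 I0 (T_nz g1 nr1 f1 c1 r1 n1 I0).
  have e2 := T_M4f gh1 nr2 f2 c2 r2 n2 c1 (irr_el_G I0) f2.
  have e1 := T_M4' g1 nr1 f1 c1 r1 n1 c1 (irr_el_G I0) nf1.
  move: E; set lam := (_ / _) => E.
  have Ev : forall y, ('chi_i2 - 'chi_j2) y = lam * ('chi_i1 - 'chi_j1) y.
    by move=> y; rewrite E !cfunE.
  have : ('chi_i2 - 'chi_j2) x0 = - ('chi_i2 - 'chi_j2) x0.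
    by rewrite -{1}e2 Ev e1 mulrN -Ev.
  move/selfopp/eqP; apply/negP; exact: T_nz gh1 nr2 f2 c2 r2 n2 x0 I0.
Qed.


Lemma cent_class x : x \in G -> (#|('C_G[x])%g| * #|(x ^: G)%g|)%N = n.
Proof. by move=> Gx; rewrite -index_cent1 Lagrange ?subsetIl. Qed.

Lemma cent_eq x y : x \in G -> y \in (x ^: G)%g -> #|('C_G[y])%g| = #|('C_G[x])%g|.
Proof.
move=> Gx Hy; have Gy := cl_G Gx Hy.
have := cent_class Gy; rewrite (class_eqP Hy) -(cent_class Gx) => /eqP.
rewrite eqn_pmul2r; first by move/eqP.
by apply/card_gt0P; exists x; rewrite class_refl.
Qed.

Lemma memJ_cls x y z : z \in G -> (y ^ z \in x ^: G)%g = (y \in x ^: G)%g.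
Proof. by move=> Gz; rewrite class_sym classGidl // class_sym. Qed.

Lemma brauer k u : aut_pow u k ->
  #|[set i : Iirr G | fixedc i k]| = #|[set K in classes G | ((repr K) ^+ k)%g \in K]|.
Proof.
move=> Hu.
have fixE : forall i, fixedc i k = (aut_Iirr u i == i).
  move=> i; apply/idP/eqP => [/fixedcP H | E].
    by apply: chi_eq_on => g Gg; rewrite aut_IirrE cfunE (aut_powE i Hu Gg) H.
  apply/fixedcP => g Gg; by rewrite -(aut_powE i Hu Gg) -[in RHS]E aut_IirrE cfunE.
apply/eqP; rewrite -(@eqr_nat algC); apply/eqP.
have L : (#|[set i : Iirr G | fixedc i k]|)%:R = \sum_i '[cfAut u 'chi[G]_i, 'chi_i].
  rewrite -sum1_card natr_sum big_mkcond /=; apply: eq_bigr => i _.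
  by rewrite -aut_IirrE cfdot_irr -fixE inE; case: fixedc.
rewrite L.
under eq_bigr => i _ do rewrite cfdotE.
rewrite -mulr_sumr exchange_big /=.
rewrite (eq_bigr (fun g => #|('C_G[g])%g|%:R *+ ((g ^+ k)%g \in (g ^: G)%g))) => [|g Gg]; last first.
  rewrite (eq_bigr (fun i => 'chi[G]_i (g ^+ k)%g * ('chi_i g)^*)) => [|i _]; last first.
    by rewrite cfunE (aut_powE i Hu Gg).
  rewrite second_orthogonality_relation //.
  case: (boolP ((g ^+ k)%g \in _)) => Hk; last by rewrite !mulr0n.
  by rewrite (cent_eq Gg Hk).
rewrite (sum_by_classes (R := algC)) => [|g h Gg Gh]; last first.
  rewrite (cent_eq Gg (memJ_class g Gh)) classGidl // -conjXg memJ_cls //.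
rewrite mulr_sumr -[X in _ = X%:R]sum1_card natr_sum [RHS]big_mkcond [LHS]big_mkcond.
apply: eq_bigr => K _; rewrite inE; case: (boolP (K \in classes G)) => //= KG.
have /repr_classesP[Gr DK] := KG.
move: Gr DK; set r := repr K => Gr DK.
suff H : forall b1 b2 : bool, b1 = b2 ->
    #|G|%:R^-1 * (#|K|%:R * (#|('C_G[r])%g|%:R *+ b1)) = (if b2 then 1 else 0) :> algC.
  by apply: H; rewrite -DK.
move=> b1 b2 <-; case: b1 => /=; last by rewrite mulr0n !mulr0.
rewrite mulr1n -natrM {1}DK mulnC cent_class // mulVf //.
by rewrite pnatr_eq0 eqn0Ngt cardG_gt0.
Qed.

End Main.

Theorem theoremA (gT : finGroupType) (G : {group gT}) :
  (#|irrat_classes G| <= 5)%N -> #|rat_classes G| = #|rat_irr G|.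
Proof.
move=> small.
case: (classic (forall k, good G k -> exists i : Iirr G, ~~ rational_irr i /\ fixedc i k)) => [NG|].
  by case: (no_good_fails small NG).
move/not_all_ex_not => [k Hk]; have [gk nex] := imply_to_and _ _ Hk.
have [ck gk'] := gk.
have [u Hu] := pow_aut_exists ck.
have E1 : [set i : Iirr G | fixedc i k] = rat_irr G.
  apply/setP => i; rewrite !inE; apply/idP/idP => [fi|ri]; last exact: rat_fixed.
  by apply: contraT => nri; exfalso; apply: nex; exists i.
have E2 : [set K in classes G | ((repr K) ^+ k)%g \in K] = rat_classes G.
  apply/setP => K; rewrite !inE; case: (boolP (K \in classes G)) => //= KG.
  have /repr_classesP[Gr DK] := KG.
  case: (boolP (rational_class G K)) => rc.
    have nI : ~~ irr_el G (repr K) by rewrite /irr_el Gr /= negbK.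
    have := rat_el_fixed Gr nI ck; by rewrite /el_fixed -DK.
  apply/negP; rewrite {2}DK => H; apply: (gk' (repr K)) => //.
  by rewrite /irr_el Gr.
by rewrite -E1 -E2 (brauer Hu).
Qed.
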